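(* Let $R_n(x)=\sum_{k=0}^nR_{n,k}x^k$ for $n\ge1$. Then for every $n\ge1$, $R_n(x)$ has only real zeros, all lying in $[-1,0)$, and $R_n(x)$ separates $R_{n+1}(x)$. More precisely, $x=-1$ is a zero of $R_n(x)$ of multiplicity $\lfloor n/2\rfloor+1$, and $R_n(x)$ has $\lceil n/2\rceil-1$ further zeros, which are simple.
   Context: Let $D$ be the derivation of $\mathbb{Q}[y,z]$ with $D(y)=z^2$, $D(z)=yz$ (corresponding to $d/dx$ with $y=\tan x$, $z=\sec x$). The integers $R_{n,k}$ are defined for $n\ge1$ by $D^n(y+z)=\sum_{k=0}^nR_{n,k}y^{n-k}z^{k+1}$ in $\mathbb{Q}[y,z]$. Equivalently, $R_1(x)=1+x$ and $R_{n+1}(x)=(1+nx^2)R_n(x)+x(1-x^2)R_n'(x)$ for $n\ge1$. For real polynomials $f,F$ with only real zeros, with zeros $r_1\ge r_2\ge\cdots$ of $f$ and $s_1\ge s_2\ge\cdots$ of $F$ (listed with multiplicity), $f$ separates $F$ means $\deg f\le\deg F\le\deg f+1$ and $s_1\ge r_1\ge s_2\ge r_2\ge s_3\ge r_3\ge\cdots$. *)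

(* Defs.v *)
From HB Require Import structures.
From mathcomp Require Import all_boot all_order all_algebra.
From mathcomp Require Import reals.
Set Implicit Arguments. Unset Strict Implicit. Unset Printing Implicit Defensive.
Import Order.TTheory GRing.Theory Num.Theory.
Local Open Scope ring_scope.

(* Rseq m = R_{m+1}(x):  R_1 = 1 + x,
   R_{n+1} = (1 + n x^2) R_n + x (1 - x^2) R_n'. *)
Fixpoint Rseq (R : nzRingType) (m : nat) : {poly R} :=
  match m with
  | 0 => 1 + 'X
  | m'.+1 => let p := Rseq R m' in
      (1 + (m'.+1)%:R *: 'X^2) * p + 'X * (1 - 'X^2) * p^`()
  end.

(* Rpoly n = R_n(x) for n >= 1 (the value at n = 0 is irrelevant). *)
Definition Rpoly (R : nzRingType) (n : nat) : {poly R} := Rseq R n.-1.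

Definition real_zeros (R : realFieldType) (p : {poly R}) (s : seq R) : Prop :=
  sorted (fun a b : R => b <= a) s /\
  p = lead_coef p *: \prod_(r <- s) ('X - r%:P).

Definition only_real_zeros (R : realFieldType) (p : {poly R}) : Prop :=
  exists s : seq R, real_zeros p s.

Definition separates (R : realFieldType) (f F : {poly R}) : Prop :=
  exists (rs ss : seq R),
    [/\ real_zeros f rs, real_zeros F ss,
        (size f <= size F <= (size f).+1)%N &
        forall i : nat, (i < size rs)%N ->
          ss`_i >= rs`_i /\ ((i.+1 < size ss)%N -> rs`_i >= ss`_i.+1)].

(* Main.v *)
Require Import Defs.
From HB Require Import structures.
From mathcomp Require Import all_boot all_order all_algebra.
From mathcomp Require Import reals.
From mathcomp Require Import ring lra zify.
Import Order.TTheory GRing.Theory Num.Theory.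
Local Open Scope ring_scope.
Set Implicit Arguments. Unset Strict Implicit. Unset Printing Implicit Defensive.
Lemma Rpoly_succ (R : rcfType) n : (1 <= n)%N ->
  Rpoly R n.+1 = (1 + n%:R *: 'X^2) * Rpoly R n + 'X * (1 - 'X^2) * (Rpoly R n)^`().
Proof. by case: n. Qed.

Lemma T_eq (R : rcfType) (N a : nat) (Q : {poly R}) :
  (1 + N%:R *: 'X^2) * (('X + 1) ^+ a.+1 * Q) + 'X * (1 - 'X^2) * (('X + 1) ^+ a.+1 * Q)^`() =
  ('X + 1) ^+ a.+1 * ((1 + N%:R *: 'X^2) * Q + 'X * (1 - 'X) * (a.+1%:R *: Q + ('X + 1) * Q^`())).
Proof.
rewrite derivM deriv_exp derivD derivX.
have -> : (1 : {poly R})^`() = 0 by rewrite -polyC1 derivC.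
rewrite addr0 mul1r /= -mulr_natl -!mul_polyC polyC_natr.
rewrite !exprS; set w := _ ^+ a.
ring.
Qed.

Lemma half_facts n : (1 <= n)%N -> ((n./2).+1 + (uphalf n - 1) = n)%N.
Proof.
move=> hn; rewrite uphalf_half; have := odd_double_half n.
case: (odd n) => /=; rewrite -addnn; lia.
Qed.
Lemma size_step (R : rcfType) (N : nat) (p : {poly R}) : (size p <= N.+1)%N ->
  (size ((1 + N%:R *: 'X^2) * p + 'X * (1 - 'X^2) * p^`())%R <= N.+2)%N.
Proof.
move=> /leq_sizeP hp; apply/leq_sizeP => j hj.
have -> : (1 + N%:R *: 'X^2) * p + 'X * (1 - 'X^2) * p^`() =
   p + N%:R *: ('X^2 * p) + 'X * p^`() - 'X^3 * p^`().
  rewrite -!mul_polyC; ring.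
rewrite !coefB !coefD coefZ !coefXnM coefXM !coef_deriv.
have -> : p`_j = 0 by apply: hp; lia.
rewrite add0r.
case: j hj => [|[|k]] hj //=.
rewrite subn2 /= (hp k.+2) ?mul0rn ?addr0; last lia.
case: k hj => [|k] hj /=.
  have -> : N = 0%N by lia.
  by rewrite mul0r subr0.
have -> : (k.+3 - 3 = k)%N by lia.
have [e|ne] := eqVneq k.+1 N.
  by rewrite -e mulr_natl subrr.
by rewrite hp ?mulr0 ?mul0rn ?subrr //; lia.
Qed.

Definition pt (R : rcfType) (s : seq R) (i : nat) : R :=
  if i is j.+1 then nth (-1) s j else 0.
Definition chain (R : rcfType) (s : seq R) : Prop :=
  forall i, (i < size s)%N -> -1 < pt s i.+1 < pt s i.

Lemma pt_ge (R : rcfType) (s : seq R) i : chain s -> -1 <= pt s i.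
Proof.
move=> hc; case: i => [|j] /=; first by rewrite lerN10.
have [hj|hj] := ltnP j (size s).
  by have /andP[h _] := hc j hj; apply: ltW.
by rewrite nth_default.
Qed.

Lemma pt_gt (R : rcfType) (s : seq R) i : chain s -> (i <= size s)%N -> -1 < pt s i.
Proof.
move=> hc; case: i => [|j] hj /=; first by rewrite ltrN10.
by have /andP[h _] := hc j hj.
Qed.

Lemma pt_le (R : rcfType) (s : seq R) i : chain s -> pt s i.+1 <= pt s i.
Proof.
move=> hc; have [hi|hi] := ltnP i (size s).
  by have /andP[_ h] := hc i hi; apply: ltW.
by rewrite /= nth_default // pt_ge.
Qed.

Lemma pt_lt (R : rcfType) (s : seq R) i j : chain s -> (i < j)%N -> (j <= size s)%N ->
  pt s j < pt s i.
Proof.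
move=> hc hij; elim: j hij => [//|j IH] hij hj.
have /andP[_ h] := hc j hj.
have [e|ne] := eqVneq i j; first by rewrite e.
have h' : pt s j < pt s i by apply: IH; lia.
lra.
Qed.

Lemma pt_neg (R : rcfType) (s : seq R) i : chain s -> (i < size s)%N -> pt s i.+1 < 0.
Proof. by move=> hc hi; apply: (pt_lt (i := 0)). Qed.

Lemma chain_mem (R : rcfType) (s : seq R) x : chain s -> x \in s -> -1 < x < 0.
Proof.
move=> hc /(nthP (-1)) [i hi <-].
have /andP[h1 _] := hc i hi; by rewrite h1 (pt_neg hc hi).
Qed.

Lemma chain_uniq (R : rcfType) (s : seq R) : chain s -> uniq s.
Proof.
move=> hc; apply/(uniqP (-1)) => i j; rewrite !inE => hi hj e.
apply/eqP; apply: contraT => ne.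
have [lt|lt] := ltnP i j.
  have := pt_lt (i := i.+1) (j := j.+1) hc lt hj; rewrite /= e ltxx //.
have lt' : (j < i)%N by rewrite ltn_neqAle eq_sym ne lt.
have := pt_lt (i := j.+1) (j := i.+1) hc lt' hi; rewrite /= e ltxx //.
Qed.

Lemma chain_interlace (R : rcfType) (s t : seq R) : chain s ->
  (forall i, (i < size t)%N -> pt s i.+1 < nth (-1) t i < pt s i) -> chain t.
Proof.
move=> hc ht i hi /=; have /andP[h1 h2] := ht i hi.
apply/andP; split; first by apply: le_lt_trans h1; apply: pt_ge.
case: i hi h1 h2 => [|j] hi h1 h2 //=.
have /andP[h3 _] := ht j (ltnW hi).
lra.
Qed.

Lemma build_seq (T : Type) (d : T) (P : nat -> T -> Prop) K :
  (forall i, (i < K)%N -> exists x, P i x) ->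
  exists t, size t = K /\ forall i, (i < K)%N -> P i (nth d t i).
Proof.
elim: K => [|K IH] h; first by exists [::].
have [t [st ht]] : exists t, size t = K /\ forall i, (i < K)%N -> P i (nth d t i).
  by apply: IH => i hi; apply: h; lia.
have [x hx] := h K (ltnSn K).
exists (rcons t x); split; first by rewrite size_rcons st.
move=> i hi; rewrite nth_rcons st.
have [lt|ge] := ltnP i K; first exact: ht.
have -> : i = K by lia.
by rewrite eqxx.
Qed.

Lemma prod_neg (R : rcfType) (F : nat -> R) i :
  (forall j, (j < i)%N -> F j < 0) -> 0 < (-1) ^+ i * \prod_(0 <= j < i) F j.
Proof.
elim: i => [|i IH] h; first by rewrite big_geq // mulr1 ltr01.
rewrite big_nat_recr //= exprS.
have h1 : 0 < (-1) ^+ i * \prod_(0 <= j < i) F j by apply: IH => j hj; apply: h; lia.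
have h2 : F i < 0 by apply: h.
have -> : -1 * (-1) ^+ i * (\prod_(0 <= j < i) F j * F i) =
   ((-1) ^+ i * \prod_(0 <= j < i) F j) * (- F i) by ring.
by apply: mulr_gt0 => //; rewrite oppr_gt0.
Qed.

Lemma prod_pos (R : rcfType) (F : nat -> R) m n :
  (forall j, (m <= j < n)%N -> 0 < F j) -> 0 < \prod_(m <= j < n) F j.
Proof.
move=> h; rewrite big_seq; apply: prodr_gt0 => j; rewrite mem_index_iota; exact: h.
Qed.

Lemma deriv_prod_at (R : rcfType) (f : nat -> R) k i : (i < k)%N ->
  (\prod_(0 <= j < k) ('X - (f j)%:P))^`().[f i] =
  \prod_(0 <= j < i) (f i - f j) * \prod_(i.+1 <= j < k) (f i - f j).
Proof.
move=> hi.
rewrite (@big_cat_nat _ _ _ i) /= ?(big_ltn hi) /= //; last exact: ltnW.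
rewrite !derivM derivXsubC !hornerE !horner_prod.
rewrite subrr.
have e : forall m n, \prod_(m <= j < n) ('X - (f j)%:P).[f i] = \prod_(m <= j < n) (f i - f j).
  by move=> m n; apply: eq_bigr => j _; rewrite hornerXsubC.
rewrite !e.
rewrite /=; ring.
Qed.

Lemma Q_facts (R : rcfType) (c : R) (s : seq R) (Q : {poly R}) : 0 < c -> chain s ->
  Q = c *: \prod_(r <- s) ('X - r%:P) ->
  [/\ 0 < Q.[0], 0 < (-1) ^+ size s * Q.[-1],
      forall i, (i < size s)%N -> Q.[nth (-1) s i] = 0 &
      forall i, (i < size s)%N -> 0 < (-1) ^+ i * Q^`().[nth (-1) s i]].
Proof.
move=> hc hs ->.
have E : \prod_(r <- s) ('X - r%:P) = \prod_(0 <= j < size s) ('X - (nth (-1) s j)%:P).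
  by rewrite (big_nth (-1)).
have hx : forall j, (j < size s)%N -> -1 < nth (-1) s j < 0.
  by move=> j hj; apply: (chain_mem hs); apply: mem_nth.
have hlt : forall i j, (i < j < size s)%N -> nth (-1) s j < nth (-1) s i.
  move=> i j /andP[hij hj]; exact: (pt_lt (i := i.+1) (j := j.+1) hs hij hj).
split.
- rewrite hornerZ E horner_prod; apply: mulr_gt0 => //.
  apply: prod_pos => j /andP[_ hj]; rewrite hornerXsubC.
  have := hx j hj; lra.
- rewrite hornerZ E horner_prod mulrCA; apply: mulr_gt0 => //.
  apply: prod_neg => j hj; rewrite hornerXsubC.
  have := hx j hj; lra.
- move=> i hi; rewrite hornerZ.
  have /rootP -> : root (\prod_(r <- s) ('X - r%:P)) (nth (-1) s i).
    by rewrite root_prod_XsubC mem_nth.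
  by rewrite mulr0.
- move=> i hi; rewrite derivZ hornerZ E deriv_prod_at //.
  set A := \prod_(0 <= j < i) _; set B := \prod_(i.+1 <= j < size s) _.
  have -> : (-1) ^+ i * (c * (A * B)) = c * ((-1) ^+ i * A) * B by ring.
  apply: mulr_gt0; first apply: mulr_gt0 => //.
    apply: prod_neg => j hj; have := hlt j i; rewrite hj hi /=; move/(_ isT); lra.
  apply: prod_pos => j /andP[hj1 hj2]; have := hlt i j; rewrite hj1 hj2 /=; move/(_ isT); lra.
Qed.

Lemma ivt_chain (R : rcfType) (T : {poly R}) (s : seq R) K : chain s ->
  (K <= (size s).+1)%N ->
  (forall i, (i <= K)%N -> 0 < (-1) ^+ i * T.[pt s i]) ->
  exists t, size t = K /\ forall i, (i < K)%N ->
    pt s i.+1 < nth (-1) t i < pt s i /\ root T (nth (-1) t i).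
Proof.
move=> hc hK hsg.
suff H : forall i, (i < K)%N -> exists x : R, pt s i.+1 < x < pt s i /\ root T x.
  exact: (build_seq (-1 : R) H).
move=> i hi.
have hab : pt s i.+1 < pt s i.
  have [lt|ge] := ltnP i (size s).
    by have /andP[_ h] := hc i lt.
  have -> : pt s i.+1 = -1 by rewrite /= nth_default.
  by apply: pt_gt => //; lia.
set q := (-1) ^+ i *: T.
have hb : 0 < q.[pt s i] by rewrite hornerZ; apply: hsg; lia.
have ha : q.[pt s i.+1] < 0.
  have := hsg i.+1 hi; rewrite hornerZ exprS mulN1r mulNr oppr_gt0 //.
have [x /andP[hx1 hx2] hr] := @poly_ivt R q (pt s i.+1) (pt s i) (ltW hab)
   (ltac:(by rewrite (ltW ha) (ltW hb))).
have hq : q.[x] = 0 by apply/rootP.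
exists x; split.
  apply/andP; split; rewrite lt_neqAle ?hx1 ?hx2 andbT.
    by apply: contraTneq ha => ->; rewrite hq ltxx.
  by apply: contraTneq hb => <-; rewrite hq ltxx.
apply/rootP; move: hq; rewrite hornerZ => /eqP; rewrite mulf_eq0 signr_eq0 /=.
by move/eqP.
Qed.

Lemma factor_roots (R : rcfType) (T : {poly R}) (L : seq R) : T != 0 -> uniq L ->
  all (root T) L -> (size T <= (size L).+1)%N ->
  T = lead_coef T *: \prod_(z <- L) ('X - z%:P).
Proof.
move=> hT hu hr hs.
have hu' : uniq_roots L by rewrite uniq_rootsE.
have [q hq] := uniq_roots_prod_XsubC hr hu'.
have hP : \prod_(z <- L) ('X - z%:P) != 0 by apply: monic_neq0; apply: monic_prod_XsubC.
have hq0 : q != 0 by apply: contraNneq hT => e; rewrite hq e mul0r.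
move: hs; rewrite hq size_mul // size_prod_XsubC => hs.
rewrite addnS /= -add1n leq_add2r in hs. have hq1 := hs.
by rewrite (size1_polyC hq1) mul_polyC lead_coefZ lead_coef_prod_XsubC mulr1.
Qed.

Lemma XaddE (R : rcfType) : ('X + 1 : {poly R}) = 'X - (-1)%:P.
Proof. by rewrite polyCN polyC1 opprK. Qed.

Lemma prod_nseq_eq (R : rcfType) (s : seq R) m :
  ('X + 1) ^+ m * \prod_(r <- s) ('X - r%:P) = \prod_(r <- s ++ nseq m (-1)) ('X - r%:P).
Proof.
rewrite big_cat /= mulrC; congr (_ * _).
elim: m => [|m IH]; first by rewrite big_nil expr0.
by rewrite /= big_cons -IH exprS XaddE.
Qed.

Lemma size_form (R : rcfType) (c : R) (s : seq R) m : c != 0 ->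
  size (c *: (('X + 1) ^+ m * \prod_(r <- s) ('X - r%:P))) = (size s + m).+1.
Proof. by move=> hc; rewrite size_scale // prod_nseq_eq size_prod_XsubC size_cat size_nseq. Qed.

Lemma lead_form (R : rcfType) (c : R) (s : seq R) m :
  lead_coef (c *: (('X + 1) ^+ m * \prod_(r <- s) ('X - r%:P))) = c.
Proof. by rewrite lead_coefZ prod_nseq_eq lead_coef_prod_XsubC mulr1. Qed.

Lemma prod_at0 (R : rcfType) (L : seq R) : (forall z, z \in L -> z < 0) ->
  0 < (\prod_(z <- L) ('X - z%:P)).[0].
Proof.
move=> h; rewrite horner_prod big_seq; apply: prodr_gt0 => z hz.
by rewrite hornerXsubC sub0r oppr_gt0 h.
Qed.

Lemma nat_odd a : ((a.*2.+1).+1./2 = a.+1)%N /\ (uphalf (a.*2.+1).+1 - 1 = a)%N /\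
   ((a.*2.+1)./2 = a)%N /\ (uphalf (a.*2.+1) - 1 = a)%N.
Proof. rewrite !uphalf_half /= !uphalf_half !half_double odd_double /=; lia. Qed.

Lemma nat_even a : ((a.*2).+1./2 = a)%N /\ (uphalf (a.*2).+1 - 1 = a)%N /\
   ((a.*2)./2 = a)%N /\ (uphalf (a.*2) - 1 = a - 1)%N.
Proof. rewrite !uphalf_half /= !uphalf_half !half_double odd_double /=; lia. Qed.

Lemma prod_cat1 (R : rcfType) (t : seq R) x :
  \prod_(z <- t ++ [:: x]) ('X - z%:P) = \prod_(z <- t) ('X - z%:P) * ('X - x%:P).
Proof. by rewrite big_cat big_seq1. Qed.

Lemma step (R : rcfType) n (c : R) s : (1 <= n)%N -> 0 < c -> chain s ->
  size s = (uphalf n - 1)%N ->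
  Rpoly R n = c *: (('X + 1) ^+ (n./2).+1 * \prod_(r <- s) ('X - r%:P)) ->
  exists c' t, [/\ 0 < c', chain t, size t = (uphalf n.+1 - 1)%N,
     Rpoly R n.+1 = c' *: (('X + 1) ^+ (n.+1./2).+1 * \prod_(r <- t) ('X - r%:P)) &
     forall i, (i < size t)%N -> pt s i.+1 < nth (-1) t i < pt s i].
Proof.
move=> hn hc hs hk hR.
set a := n./2.
set Q := c *: \prod_(r <- s) ('X - r%:P).
have [hQ0 hQm1 hQr hQd] := Q_facts (Q := Q) hc hs erefl.
set T := (1 + n%:R *: 'X^2) * Q + 'X * (1 - 'X) * (a.+1%:R *: Q + ('X + 1) * Q^`()).
have hR1 : Rpoly R n.+1 = ('X + 1) ^+ a.+1 * T.
  by rewrite Rpoly_succ // hR -/a !(scalerAr c) -/Q T_eq.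
clearbody Q.
have hnk : (a.+1 + size s = n)%N by rewrite hk; apply: half_facts.
have hsz : (size (Rpoly R n.+1) <= n.+2)%N.
  rewrite Rpoly_succ //; apply: size_step.
  by rewrite hR size_form ?gt_eqF //; lia.
have hT0 : T.[0] = Q.[0].
  by rewrite /T !(hornerD, hornerM, hornerZ, hornerXn, hornerX, hornerN, hornerC, hornerMn); ring.
have hTm1 : T.[-1] = (1 + n%:R - 2 * a.+1%:R) * Q.[-1].
  by rewrite /T !(hornerD, hornerM, hornerZ, hornerXn, hornerX, hornerN, hornerC, hornerMn); ring.
have hTs : forall i, (i < size s)%N -> T.[nth (-1) s i] =
    nth (-1) s i * (1 - nth (-1) s i) * (nth (-1) s i + 1) * Q^`().[nth (-1) s i].
  move=> i hi; rewrite /T !(hornerD, hornerM, hornerZ, hornerXn, hornerX, hornerN, hornerC, hornerMn) (hQr i hi); ring.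
have hTnz : T != 0 by apply: contraTneq hQ0 => e; rewrite -hT0 e horner0 ltxx.
have hszT : (size T <= (size s).+2)%N.
  move: hsz; rewrite hR1 size_mul ?expf_neq0 ?XaddE ?polyXsubC_eq0 // size_exp_XsubC.
  rewrite addSn /=; move: (size T) => m; lia.
have hsg : forall i, (i <= size s)%N -> 0 < (-1) ^+ i * T.[pt s i].
  case=> [|j] hj /=; first by rewrite mul1r hT0.
  rewrite hTs // exprS.
  have hx : -1 < nth (-1) s j < 0 by apply: (chain_mem hs); apply: mem_nth.
  have := hQd j hj.
  case/andP: hx => hx1 hx2.
  set x := nth (-1) s j in hx1 hx2 *; set d := Q^`().[x]; set u := (-1) ^+ j.
  have -> : -1 * u * (x * (1 - x) * (x + 1) * d) = ((- x) * (1 - x) * (x + 1)) * (u * d) by ring.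
  move=> hud; apply: mulr_gt0 => //.
  apply: mulr_gt0; first apply: mulr_gt0; lra.
have en : n = (odd n + a.*2)%N by rewrite /a odd_double_half.
move: en; case: (odd n) => /= en; rewrite ?add1n ?add0n in en.
-
  have [e1 [e2 [e3 e4]]] := nat_odd a.
  have hka : size s = a by rewrite hk en e4.
  have [t [st ht]] := ivt_chain (K := size s) hs (leqnSn _) hsg.
  have hct : chain t.
    by apply: (chain_interlace hs) => i; rewrite st => hi; have [] := ht i hi.
  have hTr1 : root T (-1).
    apply/rootP; rewrite hTm1.
    have -> : (1 + n%:R - 2 * a.+1%:R : R) = 0 by rewrite en -addn1 natrD -muln2 natrM; ring.
    by rewrite mul0r.
  have hL : T = lead_coef T *: \prod_(z <- t ++ [:: -1]) ('X - z%:P).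
    apply: factor_roots => //.
    - rewrite cat_uniq (chain_uniq hct) /= andbT orbF.
      by apply/negP => /(chain_mem hct); rewrite ltxx.
    - rewrite all_cat /= hTr1 !andbT. apply/(all_nthP (-1 : R)) => i; rewrite st => hi.
      by have [] := ht i hi.
    - by rewrite size_cat st /= addn1.
  have hneg : forall z, z \in t ++ [:: -1] -> z < 0.
    move=> z; rewrite mem_cat inE => /orP[/(chain_mem hct) /andP[] //|/eqP ->].
    by rewrite ltrN10.
  have hc' : 0 < lead_coef T.
    have h : 0 < T.[0] by rewrite hT0.
    move: h; rewrite {1}hL hornerZ => h.
    by rewrite -(pmulr_lgt0 _ (prod_at0 hneg)).
  set c' := lead_coef T in hL hc' *.
  exists c', t; split => //.
  - by rewrite st hka en e2.
  - have e1' : uphalf (a.*2.+1) = a.+1 by rewrite /= half_double.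
    rewrite hR1 hL en e1' prod_cat1 -XaddE -!scalerAr; congr (_ *: _).
    by rewrite [in RHS]exprS; ring.
  - by move=> i; rewrite st => hi; have [] := ht i hi.
-
  have [e1 [e2 [e3 e4]]] := nat_even a.
  have ha : (1 <= a)%N by move: hn; rewrite en; case: (a).
  have hka : size s = (a - 1)%N by rewrite hk en e4.
  have hsg' : forall i, (i <= (size s).+1)%N -> 0 < (-1) ^+ i * T.[pt s i].
    move=> i hi; have [le|gt] := leqP i (size s); first exact: hsg.
    have -> : i = (size s).+1 by lia.
    rewrite /= nth_default // hTm1 exprS.
    have -> : (1 + n%:R - 2 * a.+1%:R : R) = -1 by rewrite en -muln2 natrM; ring.
    have := hQm1; set u := (-1) ^+ size s; set v := Q.[-1]; move=> h.
    have -> : -1 * u * (-1 * v) = u * v by ring.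
    exact: h.
  have [t [st ht]] := ivt_chain (K := (size s).+1) hs (leqnn _) hsg'.
  have hct : chain t.
    by apply: (chain_interlace hs) => i; rewrite st => hi; have [] := ht i hi.
  have hL : T = lead_coef T *: \prod_(z <- t) ('X - z%:P).
    apply: factor_roots => //.
    - exact: chain_uniq.
    - apply/(all_nthP (-1 : R)) => i; rewrite st => hi.
      by have [] := ht i hi.
    - by rewrite st.
  have hneg : forall z, z \in t -> z < 0.
    by move=> z /(chain_mem hct) /andP[].
  have hc' : 0 < lead_coef T.
    have h : 0 < T.[0] by rewrite hT0.
    move: h; rewrite {1}hL hornerZ => h.
    by rewrite -(pmulr_lgt0 _ (prod_at0 hneg)).
  set c' := lead_coef T in hL hc' *.
  exists c', t; split => //.
  - by rewrite st hka en half_double; lia.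
  - by rewrite hR1 hL en uphalf_half odd_double half_double add0n scalerAr.
  - by move=> i; rewrite st => hi; have [] := ht i hi.
Qed.

Lemma inv_all (R : rcfType) n : (1 <= n)%N -> exists c s, [/\ 0 < c, chain s,
  size s = (uphalf n - 1)%N &
  Rpoly R n = c *: (('X + 1) ^+ (n./2).+1 * \prod_(r <- s) ('X - r%:P))].
Proof.
elim: n => [//|n IH] _.
case: n IH => [|n] IH.
  exists (1 : R), [::]; split.
  - by rewrite ltr01.
  - by [].
  - by [].
  -
  by rewrite scale1r expr1 big_nil mulr1 /Rpoly /= addrC.
have [c [s [hc hs hk hR]]] := IH isT.
have [c' [t [hc' ht hkt hR' _]]] := step (ltn0Sn n) hc hs hk hR.
by exists c', t.
Qed.

Lemma nth_rs (R : rcfType) (s : seq R) m j :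
  nth (-1) (s ++ nseq m (-1)) j = nth (-1) s j.
Proof.
rewrite nth_cat; case: ltnP => // h; rewrite nth_nseq nth_default //.
by case: ifP.
Qed.

Lemma real_zeros_form (R : rcfType) (c : R) (s : seq R) m (p : {poly R}) :
  0 < c -> chain s -> p = c *: (('X + 1) ^+ m * \prod_(r <- s) ('X - r%:P)) ->
  real_zeros p (s ++ nseq m (-1)).
Proof.
move=> hc hs hp; split.
  apply/(sortedP (-1 : R)) => i hi; rewrite !nth_rs.
  exact: (pt_le i.+1 hs).
by rewrite hp lead_form prod_nseq_eq.
Qed.

Theorem mainTheorem5 (R : realType) (n : nat) (hn : (1 <= n)%N) :
  [/\ only_real_zeros (Rpoly R n),
      (forall x : R, root (Rpoly R n) x -> -1 <= x < 0),
      separates (Rpoly R n) (Rpoly R n.+1),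
      mup (-1) (Rpoly R n) = (n./2).+1 &
      exists s : seq R,
        [/\ uniq s, all (fun r => r != -1) s, size s = (uphalf n - 1)%N &
            Rpoly R n = lead_coef (Rpoly R n) *:
              (('X + 1) ^+ (n./2).+1 * \prod_(r <- s) ('X - r%:P))]].
Proof.
have [c [s [hc hs hk hR]]] := inv_all R hn.
have [c' [t [hc' ht hkt hR' hint]]] := step hn hc hs hk hR.
have hRp : Rpoly R n = c *: \prod_(r <- s ++ nseq (n./2).+1 (-1)) ('X - r%:P).
  by rewrite hR prod_nseq_eq.
have hlead : lead_coef (Rpoly R n) = c by rewrite hR lead_form.
split.
- by exists (s ++ nseq (n./2).+1 (-1)); apply: (real_zeros_form hc hs hR).
- move=> x; rewrite hRp rootZ ?gt_eqF // root_prod_XsubC mem_cat.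
  case/orP => [/(chain_mem hs) /andP[h1 h2]|]; first by rewrite ltW.
  by rewrite mem_nseq => /andP[_ /eqP ->]; rewrite lexx ltrN10.
- exists (s ++ nseq (n./2).+1 (-1)), (t ++ nseq (n.+1./2).+1 (-1)); split.
  + exact: (real_zeros_form hc hs hR).
  + exact: (real_zeros_form hc' ht hR').
  + rewrite hR hR' !size_form ?gt_eqF //.
    have := half_facts hn; have := half_facts (ltn0Sn n); rewrite hk hkt.
    move: (n.+1./2) (uphalf n.+1) (n./2) (uphalf n) => x1 u1 x0 u0 h1 h2; clear -h1 h2; apply/andP; split; lia.
  + have hst : (size s <= size t)%N.
      rewrite hk hkt; apply: leq_sub2r; rewrite [uphalf n.+1]/= uphalf_half.
      by case: (odd n); rewrite ?add1n ?add0n // leqnSn.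
    have hsz1 : size (s ++ nseq (n./2).+1 (-1)) = n.
      by rewrite size_cat size_nseq hk addnC half_facts.
    have hsz2 : size (t ++ nseq (n.+1./2).+1 (-1)) = n.+1.
      by rewrite size_cat size_nseq hkt addnC half_facts.
    move=> i; rewrite hsz1 => hi.
    rewrite (set_nth_default (-1 : R)) ?hsz1 // (set_nth_default (-1 : R)) ?hsz2; last lia.
    rewrite !nth_rs; split.
      have [lt|ge] := ltnP i (size t).
        by have /andP[h _] := hint i lt; apply: ltW.
      have hge : (size s <= i)%N by apply: leq_trans hst ge.
      by rewrite (nth_default _ ge) (nth_default _ hge).
    move=> hi1.
    rewrite (set_nth_default (-1 : R)) ?hsz2 // nth_rs.
    have [lt|ge] := ltnP i.+1 (size t).
      by have /andP[_ h] := hint i.+1 lt; apply: ltW.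
    rewrite (nth_default _ ge); exact: (pt_ge i.+1 hs).
- rewrite hRp -mul_polyC mupMr; last by rewrite rootC gt_eqF.
  rewrite mu_prod_XsubC count_cat count_nseq /= eqxx mul1n.
  rewrite (@eq_in_count _ _ pred0) ?count_pred0 //.
  move=> x /(chain_mem hs) /andP[h1 _] /=; apply/eqP => e.
  by move: h1; rewrite e ltxx.
- exists s; split => //.
  + exact: chain_uniq.
  + apply/allP => x /(chain_mem hs) /andP[h1 _]; apply/eqP => e.
    by move: h1; rewrite e ltxx.
  + by rewrite hlead.
Qed.
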